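(* Let $H=(V,E)$ be a graph with $|V|\ge 2$, let $F$ be a vector space of dimension $r$ over $\mathbb Z_2$, and assign to each edge $e\in E$ a vector $v(e)\in F$. Suppose that for every set $S$ with $\emptyset\ne S\subsetneq V$, the vectors $\{v(e): e\in (S,V\setminus S)\}$ span $F$, where $(S,V\setminus S)=\{e\in E: e\cap S\neq\emptyset,\ e\cap (V\setminus S)\ne\emptyset\}$. Then $m(H)\ge 2^r$.
   Context: All graphs are finite and simple. For graphs $G_1=(V,E_1)$, $G_2=(V,E_2)$ on the same vertex set, their symmetric difference is the graph $(V,E_1\oplus E_2)$, where $E_1\oplus E_2$ is the set of edges belonging to exactly one of $E_1,E_2$. For a graph $H=(V,E)$, a spanning subgraph of $H$ is a graph $(V,E')$ with $E'\subseteq E$. A connectivity code for $H$ is a collection $\mathcal G$ of distinct spanning subgraphs of $H$ such that the symmetric difference of any two distinct members of $\mathcal G$ is a connected graph on the vertex set $V$. $m(H)$ denotes the maximum cardinality of a connectivity code for $H$. *)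

(* Defs.v *)
From HB Require Import structures.
From mathcomp Require Import all_boot all_order all_algebra all_field.
Set Implicit Arguments. Unset Strict Implicit. Unset Printing Implicit Defensive.

Definition simple_graph (V : finType) (E : {set {set V}}) : Prop :=
  forall e, e \in E -> #|e| = 2.

Definition adj (V : finType) (X : {set {set V}}) : rel V :=
  fun a b => [set a; b] \in X.

Definition connected_graph (V : finType) (X : {set {set V}}) : Prop :=
  forall x y : V, connect (adj X) x y.

Definition symdiff (V : finType) (X Y : {set {set V}}) : {set {set V}} :=
  (X :\: Y) :|: (Y :\: X).

Definition conn_codeb (V : finType) (E : {set {set V}}) (G : {set {set {set V}}}) : bool :=
  [forall X in G, X \subset E] &&
  [forall X in G, forall Y in G,
     (X != Y) ==> [forall x, forall y, connect (adj (symdiff X Y)) x y]].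

Definition m_code (V : finType) (E : {set {set V}}) : nat :=
  \max_(G : {set {set {set V}}} | conn_codeb E G) #|G|.

Definition cut (V : finType) (E : {set {set V}}) (S : {set V}) : {set {set V}} :=
  [set e in E | (e :&: S != set0) && (e :&: ~: S != set0)].

(* Main.v *)
Require Import Defs.
From HB Require Import structures.
From mathcomp Require Import all_boot all_order all_algebra all_field.

Set Warnings "-notation-overridden,-ambiguous-paths".
Import GRing.Theory VectorInternalTheory.

Section Aux.
Local Open Scope ring_scope.
Variable F : vectType 'F_2.

Definition phi (w : 'rV['F_2]_(dim F)) (x : F) : 'F_2 := (v2r x *m w^T) 0 0.

Lemma phi_zero w : (forall x, phi w x = 0) -> w = 0.
Proof.
move=> H; apply/rowP => i; have := H (r2v (delta_mx 0 i)).
by rewrite /phi r2vK -rowE !mxE.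
Qed.

Lemma phi_span w (s : seq F) : <<s>>%VS = fullv -> (forall z, z \in s -> phi w z = 0) ->
  forall x, phi w x = 0.
Proof.
move=> hs hz x; have: x \in <<s>>%VS by rewrite hs memvf.
rewrite -{1}[s]in_tupleE => /coord_span ->.
rewrite /phi linear_sum /= mulmx_suml summxE big1 // => i _.
rewrite linearZ /= -scalemxAl mxE.
by have := hz _ (mem_nth 0 (ltn_ord i)); rewrite /phi => ->; rewrite mulr0.
Qed.

Lemma phiB w w' x : phi (w - w') x = phi w x - phi w' x.
Proof. by rewrite /phi !mxE -sumrB; apply: eq_bigr => i _; rewrite !mxE mulrBr. Qed.

Lemma F2eq (a b : 'F_2) : (a == 1) = (b == 1) -> a = b.
Proof. by move: a b; case=> [[|[|?]] ?]; case=> [[|[|?]] ?] //= _; apply/val_inj. Qed.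
End Aux.
Arguments phi {F}.

Lemma two_set (V : finType) (e : {set V}) a b :
  #|e| = 2 -> a \in e -> b \in e -> a != b -> e = [set a; b].
Proof.
move=> he ae be ab; apply/esym/eqP; rewrite eqEcard he cards2 ab andbT.
by apply/subsetP => z; rewrite !inE => /orP [] /eqP ->.
Qed.

Lemma connect_empty (V : finType) (x y : V) : connect (adj (set0 : {set {set V}})) x y -> x = y.
Proof.
case/connectP => -[|z p] /=; first by move=> _ ->.
by rewrite {1}/adj inE.
Qed.

Theorem lemma2p1 (V : finType) (E : {set {set V}}) (r : nat)
  (F : vectType 'F_2) (v : {set V} -> F) :
  simple_graph E ->
  1 < #|V| ->
  \dim (fullv : {vspace F}) = r ->
  (forall S : {set V}, S != set0 -> S != setT ->
     (<<[seq v e | e <- enum (cut E S)]>>%VS = fullv)) ->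
  2 ^ r <= m_code E.
Proof.
move=> hsimple hV hdim hspan.
rewrite dimvf in hdim; subst r.
pose G (w : 'rV['F_2]_(dim F)) := [set e in E | phi w (v e) == 1%R].
have conn : forall w w', w != w' -> forall x y, connect (adj (symdiff (G w) (G w'))) x y.
  move=> w w' ne x y; apply/idPn => nxy.
  set D := symdiff (G w) (G w').
  pose S := [set z | connect (adj D) x z].
  have S0 : S != set0 by apply/set0Pn; exists x; rewrite inE connect0.
  have ST : S != setT.
    apply/eqP => eST; move: nxy; have: y \in S by rewrite eST inE.
    by rewrite inE => ->.
  have hs := hspan S S0 ST.
  suff: (w - w' = 0)%R by move/eqP; rewrite subr_eq0 (negbTE ne).
  apply: phi_zero; apply: phi_span hs _ => z /mapP [e].
  rewrite mem_enum inE => /andP [eE /andP [h1 h2]] ->.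
  rewrite phiB; apply/eqP; rewrite subr_eq0; apply/eqP/F2eq.
  have/set0Pn [a] := h1; rewrite !inE => /andP [ae aS].
  have/set0Pn [b] := h2; rewrite !inE => /andP [be bS].
  have ab : a != b by apply/eqP => eab; move: bS; rewrite -eab aS.
  have ee := @two_set _ _ _ _ (hsimple _ eE) ae be ab.
  have eD : e \notin D.
    apply/negP => eD; move: bS; apply/negP/negPn.
    apply: connect_trans aS (connect1 _).
    by rewrite /adj -ee.
  move: eD; rewrite /D /symdiff /G !inE eE /=.
  by case: (phi w (v e) == 1%R); case: (phi w' (v e) == 1%R).
have inj : injective G.
  move=> w w' eq; apply/eqP/negPn/negP => ne.
  have/card_gt1P [x [y [_ _ xy]]] := hV.
  have := conn _ _ ne x y; rewrite eq /symdiff setDv setU0 => /connect_empty.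
  by move/eqP: xy.
pose C := G @: [set: 'rV['F_2]_(dim F)].
have hC : conn_codeb E C.
  apply/andP; split.
    apply/forallP => X; apply/implyP => /imsetP [w _ ->].
    by apply/subsetP => e; rewrite inE => /andP [].
  apply/forallP => X; apply/implyP => /imsetP [w _ ->].
  apply/forallP => Y; apply/implyP => /imsetP [w' _ ->].
  apply/implyP => ne.
  have ne' : w != w' by apply: contraNneq ne => ->.
  by apply/forallP => x; apply/forallP => y; apply: conn.
have cC : #|C| = 2 ^ dim F.
  by rewrite card_imset // cardsT card_mx card_Fp // mul1n.
rewrite -cC /m_code.
have H := @leq_bigmax_cond _ (fun G0 => conn_codeb E G0) (fun G0 => #|G0|) C hC.
exact H.
Qed.
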